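(* Let $\mathcal{D}=\{z_1,\dots,z_n\}$, let $\mathcal{F}$ be a hypothesis class, $\ell:\mathcal{F}\times\mathcal{Z}\to\mathbb{R}_{\ge0}$ a loss with empirical risk $L(f;\mathcal{D})=\sum_{i=1}^n\ell(f;z_i)$, and let $\varepsilon\in(0,1)$. Let $\bar s_1,\dots,\bar s_n$ be any numbers with $\bar s_i\ge s_i$ for all $i$, where $s_i$ are the sensitivities. Let $\pi$ be a permutation of $\{1,\dots,n\}$ with $\bar s_{\pi(1)}\le\dots\le\bar s_{\pi(n)}$, let $\varepsilon'=\frac{2\varepsilon}{1+\varepsilon}$, let $m$ be the largest integer in $\{0,\dots,n\}$ with $\sum_{j=1}^m\bar s_{\pi(j)}\le\varepsilon'$, let $U=\{\pi(1),\dots,\pi(m)\}$, $S=\{1,\dots,n\}\setminus U$, $T_U=\sum_{i\in U}\bar s_i$, and $\alpha=\sqrt{\frac{1-\varepsilon^2}{1-T_U}}$. Then for every $f\in\mathcal{F}$, \[ (1-\varepsilon)L(f;\mathcal{D})\le \sum_{i\in S}\alpha\,\ell(f;z_i)\le (1+\varepsilon)L(f;\mathcal{D}), \] i.e. $(S,\{\alpha\}_{i\in S})$ is a $(1\pm\varepsilon)$-coreset.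
   Context: The sensitivity of point $i$ is $s_i \coloneqq \sup_{f\in\mathcal{F},\ L(f;\mathcal{D})>0} \frac{\ell(f;z_i)}{L(f;\mathcal{D})}$ (taken to be $0$ if no $f$ has $L(f;\mathcal{D})>0$). A weighted subset $(S,\{\alpha_i\}_{i\in S})$ is a $(1\pm\varepsilon)$-coreset if $(1-\varepsilon)L(f;\mathcal{D})\le\sum_{i\in S}\alpha_i\ell(f;z_i)\le(1+\varepsilon)L(f;\mathcal{D})$ for all $f\in\mathcal{F}$. *)

(* Defs.v *)
From HB Require Import structures.
From mathcomp Require Import all_boot all_order all_algebra all_fingroup.
From mathcomp Require Import all_classical all_reals ereal.
Set Implicit Arguments. Unset Strict Implicit. Unset Printing Implicit Defensive.
Import Order.TTheory GRing.Theory Num.Theory.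
Local Open Scope ring_scope.
Local Open Scope classical_set_scope.

Definition emp_risk (R : realType) (F Z : Type) (n : nat)
  (loss : F -> Z -> R) (z : 'I_n -> Z) (f : F) : R :=
  \sum_(i < n) loss f (z i).

(* Sensitivity s_i = sup_{f, L f > 0} l(f;z_i)/L(f), in the extended reals
   (may be +oo); taken to be 0 if no f has L(f) > 0. *)
Definition sensitivity (R : realType) (F Z : Type) (n : nat)
  (loss : F -> Z -> R) (z : 'I_n -> Z) (i : 'I_n) : \bar R :=
  if pselect (exists f : F, 0 < emp_risk loss z f)
  then ereal_sup [set ((loss f (z i)) / emp_risk loss z f)%:E
                  | f in [set f : F | 0 < emp_risk loss z f]]
  else 0%E.

(* Main.v *)
Require Import Defs.
From HB Require Import structures.
From mathcomp Require Import all_boot all_order all_algebra all_fingroup.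
From mathcomp Require Import all_classical all_reals ereal.
From mathcomp Require Import ring lra.
Import Order.TTheory GRing.Theory Num.Theory.
Local Open Scope ring_scope.

Lemma alg (R : realType) (eps T a L A : R) : 0 < eps -> eps < 1 ->
  T <= 2 * eps / (1 + eps) -> a = Num.sqrt ((1 - eps ^+ 2) / (1 - T)) ->
  0 <= A -> A <= T * L -> 0 <= L ->
  (1 - eps) * L <= a * (L - A) /\ a * (L - A) <= (1 + eps) * L.
Proof.
move=> e0 e1 hT ha A0 AT L0.
have hd : 1 - eps <= (1 - T) * (1 + eps).
  move: hT; rewrite ler_pdivlMr; last lra. move=> hT; nra.
have d0 : 0 < 1 - T by nra.
have a0 : 0 <= a by rewrite ha sqrtr_ge0.
have ha2 : a ^+ 2 * (1 - T) = 1 - eps ^+ 2.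
  rewrite ha sqr_sqrtr; last by apply: divr_ge0; [rewrite expr2; nra| lra].
  by rewrite mulfVK //; apply/eqP; lra.
have a1 : a <= 1 + eps.
  have h : a ^+ 2 <= (1 + eps) ^+ 2.
    have -> : a ^+ 2 = (1 - eps ^+ 2) / (1 - T) by rewrite -ha2 mulfK //; apply/eqP; lra.
    rewrite ler_pdivrMr // !expr2; nra.
  rewrite -ler_sqr ?nnegrE //; lra.
have a2 : 1 - eps <= a * (1 - T).
  have h : (1 - eps) ^+ 2 <= (a * (1 - T)) ^+ 2.
    have -> : (a * (1 - T)) ^+ 2 = (a ^+ 2 * (1 - T)) * (1 - T) by rewrite !expr2; ring.
    rewrite ha2 !expr2; nra.
  rewrite -ler_sqr ?nnegrE //; [lra | nra].
split; nra.
Qed.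
Theorem theorem1 (R : realType) (F Z : Type) (n : nat)
  (loss : F -> Z -> R) (z : 'I_n -> Z)
  (loss_ge0 : forall f x, 0 <= loss f x)
  (eps : R) (eps_gt0 : 0 < eps) (eps_lt1 : eps < 1)
  (sbar : 'I_n -> R)
  (sbar_ge : forall i, (sensitivity loss z i <= (sbar i)%:E)%E)
  (pi : {perm 'I_n})
  (pi_sorted : forall j k : 'I_n, (j <= k)%N -> sbar (pi j) <= sbar (pi k))
  (m : nat) (m_le_n : (m <= n)%N)
  (m_ok : \sum_(j < n | (j < m)%N) sbar (pi j) <= 2 * eps / (1 + eps))
  (m_max : forall k : nat, (k <= n)%N ->
     \sum_(j < n | (j < k)%N) sbar (pi j) <= 2 * eps / (1 + eps) -> (k <= m)%N)
  (U S : {set 'I_n})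
  (U_def : U = [set pi j | j : 'I_n & (j < m)%N])
  (S_def : S = ~: U)
  (alpha : R)
  (alpha_def : alpha = Num.sqrt ((1 - eps ^+ 2) / (1 - \sum_(i in U) sbar i))) :
  forall f : F,
    (1 - eps) * emp_risk loss z f <= \sum_(i in S) alpha * loss f (z i) /\
    \sum_(i in S) alpha * loss f (z i) <= (1 + eps) * emp_risk loss z f.
Proof.
move=> f.
set L := emp_risk loss z f.
set T := \sum_(i in U) sbar i.
have hT : T = \sum_(j < n | (j < m)%N) sbar (pi j).
  rewrite /T U_def big_imset /=; last by move=> x y _ _; apply: perm_inj.
  by apply: eq_bigl => j; rewrite inE.
have L0 : 0 <= L by apply: sumr_ge0.
have hsplit : L = \sum_(i in U) loss f (z i) + \sum_(i in ~: U) loss f (z i).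
  rewrite /L /emp_risk (bigID (mem U)) /=; congr (_ + _).
  by apply: eq_bigl => i; rewrite inE.
have hS : \sum_(i in S) alpha * loss f (z i) = alpha * (L - \sum_(i in U) loss f (z i)).
  by rewrite -mulr_sumr hsplit S_def addrAC subrr add0r.
have A0 : 0 <= \sum_(i in U) loss f (z i) by apply: sumr_ge0.
have AT : \sum_(i in U) loss f (z i) <= T * L.
  have [Le|Lpos] := eqVneq L 0.
    rewrite Le mulr0; have : 0 <= \sum_(i in ~: U) loss f (z i) by apply: sumr_ge0.
    move: hsplit Le; lra.
  have Lp : 0 < L by rewrite lt_def Lpos L0.
  rewrite /T mulr_suml; apply: ler_sum => i _.
  rewrite -ler_pdivrMr //.
  have := sbar_ge i; rewrite /sensitivity.
  destruct (pselect _) as [ex|nex]; last by exfalso; apply: nex; exists f.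
  move=> h; rewrite -lee_fin; apply: le_trans h.
  by apply: ereal_sup_ubound; exists f.
rewrite hS; apply: (@alg _ eps T) => //; by rewrite ?hT.
Qed.
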